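(* Let $\mathcal H\subseteq\mathcal S_+^d$ be a well-structured preconditioner set and let $f:\mathbb R^d\to\mathbb R$ be twice continuously differentiable with $\Lambda_{\mathcal H}(f)<\infty$. Then $$L_{\|\cdot\|_{\mathcal H}}(f)\le\Lambda_{\mathcal H}(f)\le d\cdot L_{\|\cdot\|_{\mathcal H}}(f).$$
   Context: $\mathcal S^d_+$ (resp. $\mathcal S^d_{++}$) denotes the set of real symmetric positive semidefinite (resp. positive definite) $d\times d$ matrices. A set $\mathcal H\subseteq\mathcal S_+^d$ is a well-structured preconditioner set if $\mathcal H=\mathcal S_+^d\cap\mathcal K$ for some set $\mathcal K$ of real $d\times d$ matrices that is closed under scalar multiplication, matrix addition and matrix multiplication and contains the identity $I_d$. For $H\in\mathcal S_+^d$, $\|x\|_H=\sqrt{x^\top Hx}$. The $\mathcal H$-norm is $\|x\|_{\mathcal H}:=\sup_{H\in\mathcal H,\operatorname{Tr}(H)\le 1}\|x\|_H$, and $\|y\|_{\mathcal H,*}:=\sup_{\|x\|_{\mathcal H}\le 1}\langle x,y\rangle$ is its dual norm. For a norm $\|\cdot\|$ with dual norm $\|\cdot\|_*$, $L_{\|\cdot\|}(f)$ is the smallest $L\ge0$ such that $\|\nabla f(x)-\nabla f(y)\|_*\le L\|x-y\|$ for all $x,y$. The adaptive smoothness is $\Lambda_{\mathcal H}(f):=\inf\{\operatorname{Tr}(H): H\in\mathcal H,\ -H\preceq\nabla^2 f(x)\preceq H\ \text{for all }x\in\mathbb R^d\}$. *)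

(* Defs.v *)
From HB Require Import structures.
From mathcomp Require Import all_boot all_order all_algebra.
From mathcomp Require Import all_classical all_reals all_analysis.
Set Implicit Arguments. Unset Strict Implicit. Unset Printing Implicit Defensive.
Import Order.TTheory GRing.Theory Num.Theory.
Import numFieldNormedType.Exports.
Local Open Scope classical_set_scope.
Local Open Scope ring_scope.

Section Defs.
Variables (R : realType) (d : nat).

Definition inner (x y : 'cV[R]_d) : R := (x^T *m y) 0 0.

Definition quad (A : 'M[R]_d) (x : 'cV[R]_d) : R := (x^T *m A *m x) 0 0.

Definition psd (A : 'M[R]_d) : Prop :=
  A^T = A /\ forall x : 'cV[R]_d, 0 <= quad A x.

Definition loewner_le (A B : 'M[R]_d) : Prop := psd (B - A).

Definition well_structured (H : set 'M[R]_d) : Prop :=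
  exists K : set 'M[R]_d,
    [/\ (forall (c : R) A, K A -> K (c *: A)),
        (forall A B, K A -> K B -> K (A + B)),
        (forall A B, K A -> K B -> K (A *m B)),
        K 1%:M &
        H = [set A | psd A /\ K A]].

Definition psd_norm (A : 'M[R]_d) (x : 'cV[R]_d) : R := Num.sqrt (quad A x).

Definition Hnorm (H : set 'M[R]_d) (x : 'cV[R]_d) : R :=
  sup [set psd_norm A x | A in [set A | H A /\ \tr A <= 1]].

Definition Hdual (H : set 'M[R]_d) (y : 'cV[R]_d) : R :=
  sup [set inner x y | x in [set x | Hnorm H x <= 1]].

Definition grad (f : 'cV[R]_d -> R) (x : 'cV[R]_d) : 'cV[R]_d :=
  \col_i ('d f x (delta_mx i 0)).

Definition hess (f : 'cV[R]_d -> R) (x : 'cV[R]_d) : 'M[R]_d :=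
  \matrix_(i, j) (('d (grad f) x (delta_mx j 0)) i 0).

Definition C2 (f : 'cV[R]_d -> R) : Prop :=
  (forall x, differentiable f x) /\
  (forall x, differentiable (grad f) x) /\
  continuous (hess f).

(* L_{||.||}(f) : smallest L >= 0 with ||grad f x - grad f y||_* <= L ||x - y||
   (as an extended real; +oo if no such L exists) *)
Definition Lsmooth (nrm dnrm : 'cV[R]_d -> R) (f : 'cV[R]_d -> R) : \bar R :=
  ereal_inf [set (L%:E) | L in [set L : R | 0 <= L /\
     forall x y, dnrm (grad f x - grad f y) <= L * nrm (x - y)]].

Definition adaptive_smoothness (H : set 'M[R]_d) (f : 'cV[R]_d -> R) : \bar R :=
  ereal_inf [set ((\tr A)%:E) | A in [set A | H A /\
     forall x, loewner_le (- A) (hess f x) /\ loewner_le (hess f x) A]].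

End Defs.

(* Main.v *)
Require Import Defs.
From HB Require Import structures.
From mathcomp Require Import all_boot all_order all_algebra.
From mathcomp Require Import all_classical all_reals all_analysis.
From mathcomp Require Import ring lra.
Import Order.TTheory GRing.Theory Num.Theory.
Import numFieldNormedType.Exports.
Set Implicit Arguments. Unset Strict Implicit. Unset Printing Implicit Defensive.
Local Open Scope classical_set_scope.
Local Open Scope ring_scope.

Lemma disc_le (R : realType) (m a b : R) : 0 <= a ->
  (forall t, 2 * t * m <= t ^+ 2 * a + b) -> m ^+ 2 <= a * b.
Proof.
move=> a0 Ht; have b0 : 0 <= b by have := Ht 0; rewrite !(mulr0, mul0r, expr0n) /=; lra.
have [a00|aneq] := eqVneq a 0.
  rewrite a00.
  have [->|mneq] := eqVneq m 0; first by rewrite expr0n /= mul0r.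
  exfalso; have := Ht ((b + 1) / (2 * m)).
  have -> : 2 * ((b + 1) / (2 * m)) * m = b + 1 by field; rewrite mneq.
  rewrite a00 mulr0 add0r; lra.
have ap : 0 < a by rewrite lt_def aneq a0.
have := Ht (m / a).
have -> : (m / a) ^+ 2 * a = m ^+ 2 / a by rewrite expr2 -!mulrA; congr (_ * _); field; rewrite aneq.
have -> : 2 * (m / a) * m = 2 * (m ^+ 2 / a) by rewrite expr2; field; rewrite aneq.
move=> h.
have h2 : m ^+ 2 / a <= b by lra.
by rewrite -ler_pdivrMl // mulrC.
Qed.

Definition bil (R : realType) (d : nat) (z : 'cV[R]_d) (A : 'M[R]_d) (u : 'cV[R]_d) : R :=
  (z^T *m A *m u) 0 0.

Lemma quadE (R : realType) (d : nat) (A : 'M[R]_d) x : quad A x = bil x A x.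
Proof. by []. Qed.

Lemma bilDl (R : realType) (d : nat) (A : 'M[R]_d) z1 z2 u :
  bil (z1 + z2) A u = bil z1 A u + bil z2 A u.
Proof. by rewrite /bil linearD !mulmxDl mxE. Qed.

Lemma bilZl (R : realType) (d : nat) (A : 'M[R]_d) (t : R) z u :
  bil (t *: z) A u = t * bil z A u.
Proof. by rewrite /bil linearZ -!scalemxAl mxE. Qed.

Lemma bilDr (R : realType) (d : nat) (A : 'M[R]_d) z u1 u2 :
  bil z A (u1 + u2) = bil z A u1 + bil z A u2.
Proof. by rewrite /bil !mulmxDr mxE. Qed.

Lemma bilZr (R : realType) (d : nat) (A : 'M[R]_d) (t : R) z u :
  bil z A (t *: u) = t * bil z A u.
Proof. by rewrite /bil -!scalemxAr mxE. Qed.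

Lemma bilDm (R : realType) (d : nat) (A B : 'M[R]_d) z u :
  bil z (A + B) u = bil z A u + bil z B u.
Proof. by rewrite /bil mulmxDr mulmxDl mxE. Qed.

Lemma bilNm (R : realType) (d : nat) (A : 'M[R]_d) z u :
  bil z (- A) u = - bil z A u.
Proof. by rewrite /bil mulmxN mulNmx mxE. Qed.

Lemma bil_sym (R : realType) (d : nat) (A : 'M[R]_d) z u :
  A^T = A -> bil z A u = bil u A z.
Proof.
move=> sA; rewrite /bil.
rewrite -[in LHS](trmxK (z^T *m A *m u)) [in LHS]mxE.
by rewrite !trmx_mul trmxK sA mulmxA.
Qed.

Lemma quad_comb (R : realType) (d : nat) (X : 'M[R]_d) (t s : R) z u :
  quad X (t *: z + s *: u) =
  t ^+ 2 * quad X z + t * s * (bil z X u + bil u X z) + s ^+ 2 * quad X u.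
Proof. rewrite !quadE !bilDl !bilDr !bilZl !bilZr; ring. Qed.

Lemma quad_addm (R : realType) (d : nat) (A B : 'M[R]_d) w :
  quad (A + B) w = quad A w + quad B w.
Proof. by rewrite !quadE bilDm. Qed.

Lemma quad_subm (R : realType) (d : nat) (A B : 'M[R]_d) w :
  quad (A - B) w = quad A w - quad B w.
Proof. by rewrite !quadE bilDm bilNm. Qed.

Lemma key_bil (R : realType) (d : nat) (A M : 'M[R]_d) z u :
  M^T = M -> (forall w, 0 <= quad (M + A) w) -> (forall w, 0 <= quad (A - M) w) ->
  bil z M u ^+ 2 <= quad A z * quad A u.
Proof.
move=> sM h1 h2.
have qA w : 0 <= quad A w.
  by have := h1 w; have := h2 w; rewrite quad_subm quad_addm; lra.
apply: disc_le => // t.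
have e1 := h2 (t *: z + 1 *: u).
have e2 := h1 (t *: z + (-1) *: u).
rewrite quad_subm !quad_comb in e1.
rewrite quad_addm !quad_comb in e2.

rewrite (bil_sym u z sM) in e1 e2.
move: e1 e2; rewrite sqrrN !expr1n; nra.
Qed.

Lemma quad_sum (R : realType) (d : nat) (A : 'M[R]_d) x :
  quad A x = \sum_i \sum_j x i 0 * A i j * x j 0.
Proof.
rewrite /quad mxE exchange_big /=; apply: eq_bigr => j _.
rewrite mxE big_distrl /=; apply: eq_bigr => i _.
by rewrite mxE.
Qed.

Lemma inner_sum (R : realType) (d : nat) (x y : 'cV[R]_d) :
  inner x y = \sum_i x i 0 * y i 0.
Proof. by rewrite /inner mxE; apply: eq_bigr => i _; rewrite mxE. Qed.

Lemma bil_delta (R : realType) (d : nat) (A : 'M[R]_d) i j :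
  bil (delta_mx i 0) A (delta_mx j 0) = A i j.
Proof.
by rewrite /bil trmx_delta -rowE -colE !mxE.
Qed.

Lemma psd_diag (R : realType) (d : nat) (A : 'M[R]_d) i : psd A -> 0 <= A i i.
Proof. by case=> _ h; have := h (delta_mx i 0); rewrite quadE bil_delta. Qed.

Lemma psd_entry (R : realType) (d : nat) (A : 'M[R]_d) i j :
  psd A -> A i j ^+ 2 <= A i i * A j j.
Proof.
move=> [sA pA].
have := @key_bil R d A A (delta_mx i 0) (delta_mx j 0) sA.
rewrite !quadE !bil_delta; apply.
  by move=> w; rewrite quad_addm; have := pA w; lra.
by move=> w; rewrite subrr quadE /bil mulmx0 mul0mx mxE.
Qed.

Lemma amgm_aux (R : realType) (m P Q : R) : 0 <= P -> 0 <= Q -> m ^+ 2 <= P * Q ->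
  2 * m <= P + Q.
Proof.
move=> hP hQ hm; rewrite leNgt; apply/negP => h.
have h2 : 0 < 2 * m + P + Q by lra.
have h3 : 0 <= (P - Q) ^+ 2 by exact: sqr_ge0.
have h4 : 0 < (2 * m - (P + Q)) * (2 * m + P + Q) by apply: mulr_gt0; lra.
nra.
Qed.

Lemma psd_trace_bound (R : realType) (d : nat) (A : 'M[R]_d) x :
  psd A -> quad A x <= \tr A * inner x x.
Proof.
move=> pA.
have H1 : 2 * quad A x <= \sum_i \sum_j (x i 0 ^+ 2 * A j j + x j 0 ^+ 2 * A i i).
  rewrite quad_sum mulr_sumr; apply: ler_sum => i _.
  rewrite mulr_sumr; apply: ler_sum => j _.
  apply: amgm_aux.
  - by apply: mulr_ge0; [exact: sqr_ge0| exact: psd_diag].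
  - by apply: mulr_ge0; [exact: sqr_ge0| exact: psd_diag].
  have := psd_entry i j pA.
  have := psd_diag i pA; have := psd_diag j pA.
  move=> h1 h2 h3.
  have -> : (x i 0 * A i j * x j 0) ^+ 2 = (x i 0 ^+ 2 * x j 0 ^+ 2) * A i j ^+ 2 by ring.
  have -> : x i 0 ^+ 2 * A j j * (x j 0 ^+ 2 * A i i) = (x i 0 ^+ 2 * x j 0 ^+ 2) * (A i i * A j j) by ring.
  apply: ler_wpM2l => //; apply: mulr_ge0; exact: sqr_ge0.
have E : \sum_i \sum_j (x i 0 ^+ 2 * A j j + x j 0 ^+ 2 * A i i) = 2 * (\tr A * inner x x).
  under eq_bigr do rewrite big_split /=.
  rewrite big_split /= [X in _ + X]exchange_big /=.
  have -> : \sum_i \sum_j x i 0 ^+ 2 * A j j = \tr A * inner x x.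
    rewrite inner_sum mulrC big_distrl /=; apply: eq_bigr => i _.
    by rewrite mulr_sumr /mxtrace; apply: eq_bigr => j _; rewrite expr2.
  by rewrite mulr2n mulrDl mul1r.
rewrite E in H1; lra.
Qed.

Lemma inner_bil (R : realType) (d : nat) (x y : 'cV[R]_d) : inner x y = bil x 1%:M y.
Proof. by rewrite /inner /bil mulmx1. Qed.

Lemma inner_ge0 (R : realType) (d : nat) (x : 'cV[R]_d) : 0 <= inner x x.
Proof. by rewrite inner_sum; apply: sumr_ge0 => i _; rewrite -expr2 sqr_ge0. Qed.

Lemma psd1 (R : realType) (d : nat) : psd (1%:M : 'M[R]_d).
Proof. by split; [rewrite trmx1 | move=> x; rewrite quadE -inner_bil inner_ge0]. Qed.

Lemma psdZ (R : realType) (d : nat) (c : R) (A : 'M[R]_d) : 0 <= c -> psd A -> psd (c *: A).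
Proof.
move=> c0 [sA pA]; split; first by rewrite linearZ /= sA.
by move=> x; rewrite /quad -scalemxAr -scalemxAl mxE mulr_ge0 // pA.
Qed.

Lemma quadZm (R : realType) (d : nat) (c : R) (A : 'M[R]_d) x : quad (c *: A) x = c * quad A x.
Proof. by rewrite /quad -scalemxAr -scalemxAl mxE. Qed.

Lemma inner_CS (R : realType) (d : nat) (x y : 'cV[R]_d) :
  inner x y ^+ 2 <= inner x x * inner y y.
Proof.
rewrite !inner_bil -!quadE; apply: key_bil; first by rewrite trmx1.
  by move=> w; rewrite quad_addm quadE -inner_bil; have := inner_ge0 w; lra.
by move=> w; rewrite subrr quadE /bil mulmx0 mul0mx mxE.
Qed.

Definition en (R : realType) (d : nat) (x : 'cV[R]_d) : R := Num.sqrt (inner x x).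

Lemma inner_CS_abs (R : realType) (d : nat) (x y : 'cV[R]_d) :
  `|inner x y| <= en x * en y.
Proof.
rewrite /en -sqrtrM ?inner_ge0 // -sqrtr_sqr; apply: ler_wsqrtr; exact: inner_CS.
Qed.

Lemma innerZl (R : realType) (d : nat) (c : R) (x y : 'cV[R]_d) : inner (c *: x) y = c * inner x y.
Proof. by rewrite !inner_bil bilZl. Qed.
Lemma innerZr (R : realType) (d : nat) (c : R) (x y : 'cV[R]_d) : inner x (c *: y) = c * inner x y.
Proof. by rewrite !inner_bil bilZr. Qed.

Lemma enZ (R : realType) (d : nat) (c : R) (x : 'cV[R]_d) : en (c *: x) = `|c| * en x.
Proof.
by rewrite /en innerZl innerZr mulrA -expr2 sqrtrM ?sqr_ge0 // sqrtr_sqr.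
Qed.

Lemma trace_psd_ge0 (R : realType) (d : nat) (A : 'M[R]_d) : psd A -> 0 <= \tr A.
Proof. by move=> pA; apply: sumr_ge0 => i _; exact: psd_diag. Qed.

Lemma ws_psd (R : realType) (d : nat) (H : set 'M[R]_d) A :
  well_structured H -> H A -> psd A.
Proof. by move=> [K [_ _ _ _ ->]] []. Qed.

Lemma ws_Z (R : realType) (d : nat) (H : set 'M[R]_d) c A :
  well_structured H -> 0 <= c -> H A -> H (c *: A).
Proof.
move=> [K [KZ _ _ _ HE]] c0; rewrite HE => -[pA KA]; split; last exact: KZ.
exact: psdZ.
Qed.

Lemma ws_1 (R : realType) (d : nat) (H : set 'M[R]_d) c :
  well_structured H -> 0 <= c -> H (c *: 1%:M).
Proof.
move=> ws c0; apply: ws_Z => //; case: ws => K [_ _ _ K1 HE].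
by rewrite HE; split => //; exact: psd1.
Qed.

Definition c0 (R : realType) (d : nat) : R := (d%:R + 1)^-1.

Lemma dp1_gt0 (R : realType) (d : nat) : 0 < (d%:R + 1 : R).
Proof. by have := ler0n R d; lra. Qed.

Lemma c0_gt0 (R : realType) (d : nat) : 0 < c0 R d.
Proof. by rewrite /c0 invr_gt0 dp1_gt0. Qed.

Lemma tr_c0 (R : realType) (d : nat) : \tr ((c0 R d) *: (1%:M : 'M[R]_d)) <= 1.
Proof.
rewrite mxtraceZ mxtrace1 /c0 ler_pdivrMl; last by exact: dp1_gt0.
by rewrite mulr1 lerDl.
Qed.

Definition Hset (R : realType) (d : nat) (H : set 'M[R]_d) x :=
  [set psd_norm A x | A in [set A | H A /\ \tr A <= 1]].

Lemma Hset_ub (R : realType) (d : nat) (H : set 'M[R]_d) x :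
  well_structured H -> ubound (Hset H x) (en x).
Proof.
move=> ws _ [A [HA trA] <-]; rewrite /psd_norm /en; apply: ler_wsqrtr.
apply: (le_trans (psd_trace_bound x (ws_psd ws HA))).
by rewrite ler_piMl // inner_ge0.
Qed.

Lemma Hset_n0 (R : realType) (d : nat) (H : set 'M[R]_d) x :
  well_structured H -> Hset H x !=set0.
Proof.
move=> ws; exists (psd_norm (c0 R d *: 1%:M) x), (c0 R d *: 1%:M) => //; split.
  by apply: ws_1 => //; exact/ltW/c0_gt0.
exact: tr_c0.
Qed.

Lemma Hnorm_le_en (R : realType) (d : nat) (H : set 'M[R]_d) x :
  well_structured H -> Hnorm H x <= en x.
Proof. by move=> ws; apply: ge_sup; [exact: Hset_n0 | exact: Hset_ub]. Qed.

Lemma Hnorm_ge (R : realType) (d : nat) (H : set 'M[R]_d) x A :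
  well_structured H -> H A -> \tr A <= 1 -> psd_norm A x <= Hnorm H x.
Proof.
move=> ws HA trA; apply: (ub_le_sup (E := Hset H x)); first by exists (en x); exact: Hset_ub.
by exists A.
Qed.

Lemma Hnorm_ge0 (R : realType) (d : nat) (H : set 'M[R]_d) x :
  well_structured H -> 0 <= Hnorm H x.
Proof.
move=> ws; apply: le_trans (Hnorm_ge x ws (ws_1 ws (ltW (c0_gt0 R d))) (tr_c0 R d)).
exact: sqrtr_ge0.
Qed.

Lemma sqrt_le_sq (R : realType) (a b : R) : 0 <= a -> Num.sqrt a <= b -> a <= b ^+ 2.
Proof.
move=> a0 h; rewrite -(sqr_sqrtr a0).
have s0 := sqrtr_ge0 a; nra.
Qed.

Lemma inner_le_Hnorm (R : realType) (d : nat) (H : set 'M[R]_d) x :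
  well_structured H -> inner x x <= (d%:R + 1) * Hnorm H x ^+ 2.
Proof.
move=> ws; have := Hnorm_ge x ws (ws_1 ws (ltW (c0_gt0 R d))) (tr_c0 R d).
rewrite /psd_norm quadZm quadE -inner_bil => h.
have := sqrt_le_sq (mulr_ge0 (ltW (c0_gt0 R d)) (inner_ge0 x)) h.
rewrite /c0 => h2.
have e : inner x x = (d%:R + 1) * ((d%:R + 1)^-1 * inner x x).
  by rewrite mulrA mulfV ?mul1r // gt_eqF // dp1_gt0.
by rewrite e; apply: ler_wpM2l => //; exact/ltW/dp1_gt0.
Qed.

Lemma quad_le_Hnorm (R : realType) (d : nat) (H : set 'M[R]_d) A w :
  well_structured H -> H A -> quad A w <= \tr A * Hnorm H w ^+ 2.
Proof.
move=> ws HA; have pA := ws_psd ws HA.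
have [t0|tp] := eqVneq (\tr A) 0.
  by have := psd_trace_bound w pA; rewrite t0 !mul0r.
have tpos : 0 < \tr A by rewrite lt_def tp trace_psd_ge0.
have HA' : H ((\tr A)^-1 *: A) by apply: ws_Z => //; rewrite invr_ge0 ltW.
have trA' : \tr ((\tr A)^-1 *: A) <= 1 by rewrite mxtraceZ mulVf.
have := Hnorm_ge w ws HA' trA'; rewrite /psd_norm quadZm => h.
have q0 : 0 <= quad A w by case: pA.
have ti : 0 <= (\tr A)^-1 by rewrite invr_ge0 ltW.
have := sqrt_le_sq (mulr_ge0 ti q0) h => h2.
have e : quad A w = \tr A * ((\tr A)^-1 * quad A w) by rewrite mulrA mulfV ?mul1r.
by rewrite e; apply: ler_wpM2l => //; exact/ltW.
Qed.

Definition Dset (R : realType) (d : nat) (H : set 'M[R]_d) g :=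
  [set inner x g | x in [set x | Hnorm H x <= 1]].

Lemma sq_bound (R : realType) (m K : R) : m ^+ 2 <= K -> m <= K + 1.
Proof.
move=> h; have := sqr_ge0 m; rewrite expr2 in h * => h0.
have [m1|m1] := lerP m 1; first by lra.
have : m * 1 < m * m by rewrite ltr_pM2l //; lra.
lra.
Qed.

Lemma Dset_ub (R : realType) (d : nat) (H : set 'M[R]_d) g :
  well_structured H -> ubound (Dset H g) ((d%:R + 1) * inner g g + 1).
Proof.
move=> ws _ [x hx <-]; apply: sq_bound.
apply: (le_trans (inner_CS x g)).
have h1 := inner_le_Hnorm x ws; have h0 := Hnorm_ge0 x ws.
have g0 := inner_ge0 g; have dp := dp1_gt0 R d.
have hx' : Hnorm H x <= 1 := hx.
have hx2 : Hnorm H x ^+ 2 <= 1 by rewrite expr2; nra.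
have : inner x x <= d%:R + 1 by apply: (le_trans h1); nra.
move=> h; apply: ler_wpM2r => //.
Qed.

Lemma Hnorm0 (R : realType) (d : nat) (H : set 'M[R]_d) :
  well_structured H -> Hnorm H 0 <= 1.
Proof.
move=> ws; apply: (le_trans (Hnorm_le_en 0 ws)).
by rewrite /en /inner trmx0 mul0mx mxE sqrtr0.
Qed.

Lemma Hdual_ge (R : realType) (d : nat) (H : set 'M[R]_d) g x :
  well_structured H -> Hnorm H x <= 1 -> inner x g <= Hdual H g.
Proof.
move=> ws hx; apply: (ub_le_sup (E := Dset H g)).
  by exists ((d%:R + 1) * inner g g + 1); exact: Dset_ub.
by exists x.
Qed.

Lemma Hdual_le (R : realType) (d : nat) (H : set 'M[R]_d) g B :
  well_structured H -> (forall x, Hnorm H x <= 1 -> inner x g <= B) -> Hdual H g <= B.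
Proof.
move=> ws hB; apply: ge_sup; first by exists (inner 0 g), 0 => //; exact: Hnorm0.
by move=> _ [x hx <-]; exact: hB.
Qed.

Lemma en_le_Hdual (R : realType) (d : nat) (H : set 'M[R]_d) g :
  well_structured H -> en g <= Hdual H g.
Proof.
move=> ws; have [e0|en0] := eqVneq (en g) 0.
  rewrite e0; have := Hdual_ge g ws (Hnorm0 ws).
  by rewrite /inner trmx0 mul0mx mxE.
have enp : 0 < en g by rewrite lt_def en0 sqrtr_ge0.
have hx : Hnorm H ((en g)^-1 *: g) <= 1.
  apply: (le_trans (Hnorm_le_en _ ws)).
  rewrite enZ ger0_norm; last by rewrite invr_ge0 ltW.
  by rewrite mulVf.
apply: le_trans (Hdual_ge g ws hx).
rewrite innerZl -(sqr_sqrtr (inner_ge0 g)) -/(en g) expr2 mulrA mulVf //.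
by rewrite mul1r.
Qed.


Lemma dG_hess (R : realType) (d : nat) (f : 'cV[R]_d -> R) p u :
  'd (grad f) p u = hess f p *m u.
Proof.
apply/matrixP => i j; rewrite ord1.
rewrite {1}(matrix_sum_delta u) linear_sum summxE.
rewrite mxE; apply: eq_bigr => k _.
by rewrite big_ord1 linearZ mxE /hess mxE mulrC.
Qed.

Lemma line_quot (R : realType) (d : nat) (G : 'cV[R]_d -> 'cV[R]_d) (u y : 'cV[R]_d) (t : R) :
  (fun h : R => h^-1 *: (((fun s : R => G (s *: u + y)) \o shift t) h%:A - G (t *: u + y))) =
  (fun h : R => h^-1 *: ((G \o shift (t *: u + y)) (h *: u) - G (t *: u + y))).
Proof. by apply: funext => h /=; rewrite [h%:A]mulr1 scalerDl addrA. Qed.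

Lemma derive_line (R : realType) (d : nat) (G : 'cV[R]_d -> 'cV[R]_d) (u y : 'cV[R]_d) (t : R) :
  'D_1 (fun s : R => G (s *: u + y)) t = 'D_u G (t *: u + y).
Proof. by rewrite /derive line_quot. Qed.

Lemma derivable_line (R : realType) (d : nat) (G : 'cV[R]_d -> 'cV[R]_d) (u y : 'cV[R]_d) (t : R) :
  derivable (fun s : R => G (s *: u + y)) t 1 = derivable G (t *: u + y) u.
Proof. by rewrite /derivable line_quot. Qed.

Lemma phi_deriv (R : realType) (d : nat) (f : 'cV[R]_d -> R) (z u y : 'cV[R]_d) (t : R) :
  (forall x, differentiable (grad f) x) ->
  derivable (fun s : R => inner z (grad f (s *: u + y))) t 1 /\
  'D_1 (fun s : R => inner z (grad f (s *: u + y))) t = inner z (hess f (t *: u + y) *m u).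
Proof.
move=> dG.
set g := fun s : R => grad f (s *: u + y).
have dg : derivable g t 1 by rewrite /g derivable_line; apply: diff_derivable.
have Dg : 'D_1 g t = hess f (t *: u + y) *m u by rewrite /g derive_line deriveE // dG_hess.
have dgi i : derivable (fun s => g s i 0) t 1 by move/derivable_mxP: dg; apply.
have Dgi i : 'D_1 (fun s => g s i 0) t = ('D_1 g t) i 0 by rewrite (derive_mx dg) mxE.
have E : (fun s => inner z (g s)) = \sum_(i < d) (z i 0 *: (fun s => g s i 0)).
  rewrite fct_sumE; apply: funext => s; rewrite inner_sum; apply: eq_bigr => i _.
  by [].
rewrite E; split.
  by apply: derivable_sum => i; apply: derivableZ.
rewrite derive_sum; last by move=> i; apply: derivableZ.
rewrite -Dg inner_sum; apply: eq_bigr => i _.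
by rewrite deriveZ // Dgi.
Qed.

Lemma sq_le (R : realType) (b K : R) : 0 <= K -> b ^+ 2 <= K ^+ 2 -> b <= K.
Proof.
move=> K0 h; rewrite leNgt; apply/negP => bK.
have : K * K < b * b by apply: ltr_pM => //.
rewrite !expr2 in h; lra.
Qed.

Lemma innerB (R : realType) (d : nat) (z a b : 'cV[R]_d) : inner z (a - b) = inner z a - inner z b.
Proof. by rewrite !inner_bil bilDr -scaleN1r bilZr mulN1r. Qed.

Lemma inner_mul (R : realType) (d : nat) (z u : 'cV[R]_d) M : inner z (M *m u) = bil z M u.
Proof. by rewrite /inner /bil mulmxA. Qed.

Lemma hess_sym_of (R : realType) (d : nat) (A M : 'M[R]_d) :
  A^T = A -> loewner_le (- A) M -> M^T = M.
Proof.
move=> sA [h _]; move: h; rewrite opprK => h.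
rewrite linearD /= sA in h; exact: addIr h.
Qed.

Lemma dir1 (R : realType) (d : nat) (H : set 'M[R]_d) (f : 'cV[R]_d -> R) A :
  well_structured H -> C2 f -> H A ->
  (forall x, loewner_le (- A) (hess f x) /\ loewner_le (hess f x) A) ->
  forall x y, Hdual H (grad f x - grad f y) <= \tr A * Hnorm H (x - y).
Proof.
move=> ws [_ [dG _]] HA hA x y.
apply: Hdual_le => // z hz.
set u := x - y.
set phi := fun s : R => inner z (grad f (s *: u + y)).
have dphi s : derivable phi s 1 by have [] := phi_deriv z u y s dG.
have hmvt := @MVT R phi (fun s => 'D_1 phi s) 0 1 ltr01.
have [c _ hc] := hmvt (fun s _ => derivableP (dphi s)) (derivable_within_continuous (fun s _ => dphi s)).
have E1 : phi 1 - phi 0 = inner z (grad f x - grad f y).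
  by rewrite /phi innerB scale1r scale0r add0r /u subrK.
rewrite -E1 hc subr0 mulr1.
have [_ ->] := phi_deriv z u y c dG.
rewrite inner_mul.
set M := hess f (c *: u + y).
have pA := ws_psd ws HA.
have [h1 h2] := hA (c *: u + y).
have sM : M^T = M by apply: hess_sym_of h1; case: pA.
have kb : bil z M u ^+ 2 <= quad A z * quad A u.
  apply: key_bil => [//|w|w].
    by case: h1 => _; rewrite opprK.
  by case: h2.
have qz := quad_le_Hnorm z ws HA.
have qu := quad_le_Hnorm u ws HA.
have hz' : Hnorm H z <= 1 := hz.
have n0z := Hnorm_ge0 z ws; have n0u := Hnorm_ge0 u ws.
have t0 := trace_psd_ge0 pA.
have q0z : 0 <= quad A z by case: pA.
have q0u : 0 <= quad A u by case: pA.
apply: sq_le; first exact: mulr_ge0.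
apply: (le_trans kb).
have hz2 : Hnorm H z ^+ 2 <= 1 by rewrite expr2 -(mulr1 1); apply: ler_pM.
have : quad A z <= \tr A by apply: (le_trans qz); rewrite ler_piMr.
move=> qz'.
rewrite exprMn; apply: (@le_trans _ _ (\tr A * (\tr A * Hnorm H u ^+ 2))).
  by apply: ler_pM.
by rewrite mulrA expr2.
Qed.

Lemma dir2 (R : realType) (d : nat) (H : set 'M[R]_d) (f : 'cV[R]_d -> R) (L : R) :
  well_structured H -> C2 f -> 0 <= L ->
  (forall x y, Hdual H (grad f x - grad f y) <= L * Hnorm H (x - y)) ->
  forall x v, `|quad (hess f x) v| <= L * inner v v.
Proof.
move=> ws [_ [dG _]] L0 hL x v.
set phi := fun s : R => inner v (grad f (s *: v + x)).
have [dphi Dphi] := phi_deriv v v x 0 dG.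
rewrite -/phi scale0r add0r inner_mul -quadE in Dphi.
rewrite -Dphi.
have bnd h : h != 0 -> `|h^-1 *: ((phi \o shift 0) (h *: 1) - phi 0)| <= L * inner v v.
  move=> hn0.
  rewrite /= addr0 [h *: 1]mulr1 /phi scale0r add0r -innerB.
  set D := grad f (h *: v + x) - grad f x.
  have e1 := inner_CS_abs v D.
  have e2 := en_le_Hdual D ws.
  have e3 : Hdual H D <= L * Hnorm H (h *: v) by rewrite /D (le_trans (hL _ _)) // addrK.
  have e4 := Hnorm_le_en (h *: v) ws.
  rewrite enZ in e4.
  have env := sqrtr_ge0 (inner v v).
  have hv : inner v v = en v * en v by rewrite -expr2 /en sqr_sqrtr // inner_ge0.
  rewrite normrZ normfV.
  have hp : 0 < `|h| by rewrite normr_gt0.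
  rewrite ler_pdivrMl //.
  apply: (le_trans e1).
  have enD0 : 0 <= en D by exact: sqrtr_ge0.
  have : en D <= L * (`|h| * en v).
    apply: (le_trans e2); apply: (le_trans e3); apply: ler_wpM2l => //.
  move=> e5; rewrite hv.
  have := ler_wpM2l env e5.
  move=> e6; apply: (le_trans e6); rewrite le_eqVlt; apply/orP; left; apply/eqP; rewrite /en; ring.
have cv : cvg ((fun h : R => h^-1 *: ((phi \o shift 0) (h *: 1) - phi 0)) @ 0^') := dphi.
rewrite /derive ler_norml; apply/andP; split.
  apply: limr_ge => //; near=> h.
  have := bnd h; rewrite ler_norml => /(_ _)/andP[] //.
  by near: h; exact: nbhs_dnbhs_neq.
apply: limr_le => //; near=> h.
have := bnd h; rewrite ler_norml => /(_ _)/andP[] //.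
by near: h; exact: nbhs_dnbhs_neq.
Unshelve. all: by end_near.
Qed.


Lemma tr0_d0 (R : realType) (d : nat) (A : 'M[R]_d) : d%:R = 0 :> R -> \tr A = 0.
Proof.
move=> /eqP; rewrite pnatr_eq0 => /eqP d0.
rewrite /mxtrace; apply: big1 => i _; exfalso.
have : (i < d)%N := ltn_ord i; move: (nat_of_ord i) => k; by rewrite d0.
Qed.

Lemma quad1 (R : realType) (d : nat) (w : 'cV[R]_d) : quad 1%:M w = inner w w.
Proof. by rewrite quadE -inner_bil. Qed.

Unset Implicit Arguments.

Theorem proposition2p1 (R : realType) (d : nat) (H : set 'M[R]_d)
  (f : 'cV[R]_d -> R) :
  well_structured H -> C2 f -> (adaptive_smoothness H f < +oo)%E ->
  (Lsmooth (Hnorm H) (Hdual H) f <= adaptive_smoothness H f)%E /\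
  (adaptive_smoothness H f <= (d%:R)%:E * Lsmooth (Hnorm H) (Hdual H) f)%E.
Proof.
move=> ws C2f Lfin.
have [A0 [HA0 hA0]] : exists A, H A /\
    (forall x, loewner_le (- A) (hess f x) /\ loewner_le (hess f x) A).
  apply: contrapT => hno; move: Lfin.
  have -> : adaptive_smoothness H f = +oo%E.
    apply/ereal_inf_pinfty => _ [A hA <-]; exfalso; apply: hno; exists A; exact: hA.
  by rewrite ltxx.
have Lam_le : forall A, H A ->
    (forall x, loewner_le (- A) (hess f x) /\ loewner_le (hess f x) A) ->
    (adaptive_smoothness H f <= (\tr A)%:E)%E.
  by move=> A HA hA; apply: ereal_inf_lbound; exists A.
have Lam_ge0 : (0 <= adaptive_smoothness H f)%E.
  apply: le_ereal_inf_tmp => _ [A [HA _] <-]; rewrite lee_fin.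
  exact: trace_psd_ge0 (ws_psd ws HA).
split.
  apply: le_ereal_inf_tmp => _ [A [HA hA] <-].
  apply: ereal_inf_lbound; exists (\tr A) => //; split.
    exact: trace_psd_ge0 (ws_psd ws HA).
  exact: dir1 ws C2f HA hA.
have sym : forall x, (hess f x)^T = hess f x.
  move=> x; apply: (hess_sym_of (A := A0)); first by case: (ws_psd ws HA0).
  by case: (hA0 x).
have key : forall L, 0 <= L ->
    (forall x y, Hdual H (grad f x - grad f y) <= L * Hnorm H (x - y)) ->
    (adaptive_smoothness H f <= (d%:R * L)%:E)%E.
  move=> L L0 hL.
  have -> : d%:R * L = \tr (L *: (1%:M : 'M[R]_d)) by rewrite mxtraceZ mxtrace1 mulrC.
  apply: Lam_le.
    apply: ws_1 => //.
  move=> x; have hb := dir2 ws C2f L0 hL x.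
  split; split.
  - by rewrite opprK linearD /= sym linearZ /= trmx1.
  - move=> w; rewrite opprK quad_addm quadZm quad1.
    by have := hb w; rewrite ler_norml => /andP[h1 _]; lra.
  - by rewrite linearD /= linearN /= sym linearZ /= trmx1.
  - move=> w; rewrite quad_subm quadZm quad1.
    by have := hb w; rewrite ler_norml => /andP[_ h2]; lra.
have [dz|dnz] := eqVneq (d%:R : R) 0.
  rewrite dz mul0e; apply: (le_trans (Lam_le A0 HA0 hA0)).
  by rewrite tr0_d0.
have dpos : 0 < (d%:R : R) by rewrite lt_def dnz ler0n.
set LS := Lsmooth (Hnorm H) (Hdual H) f.
have [LSoo|LSfin] := eqVneq LS +oo%E.
  by rewrite LSoo mulry gtr0_sg // mul1e leey.
have LS0 : (0 <= LS)%E by apply: le_ereal_inf_tmp => _ [L [L0 _] <-]; rewrite lee_fin.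
have LSf : LS \is a fin_num by rewrite ge0_fin_numE // ltey.
have Lamf : adaptive_smoothness H f \is a fin_num by rewrite ge0_fin_numE.
have h1 : ((fine (adaptive_smoothness H f) / d%:R)%:E <= LS)%E.
  apply: le_ereal_inf_tmp => _ [L [L0 hL] <-]; rewrite lee_fin ler_pdivrMr //.
  by move: (key L L0 hL); rewrite -{1}(fineK Lamf) lee_fin mulrC.
rewrite -(fineK LSf) -(fineK Lamf) -EFinM lee_fin.
move: h1; rewrite -{1}(fineK LSf) lee_fin ler_pdivrMr // mulrC. by [].
Qed.
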